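(* Let $\varphi$ be a flow on a locally compact metric space $X$, $S\subset X$ a nonempty compact invariant set, and $\mathcal M=\{M_p\mid p\in\mathbb P\}$ an indexed family of mutually disjoint closed invariant subsets of $S$. Then $\mathcal M$ is a Morse predecomposition of $S$ if and only if $T\cap\bigcup_{p\in\mathbb P}M_p\ne\emptyset$ for every nonempty closed invariant set $T\subset S$.
   Context: A full solution is a map $\gamma:\mathbb R\to X$ with $\gamma(s+t)=\varphi(\gamma(s),t)$; it is in $S$ if its image lies in $S$. $\alpha(\gamma)=\bigcap_{t<0}\operatorname{cl}\gamma((-\infty,t])$, $\omega(\gamma)=\bigcap_{t>0}\operatorname{cl}\gamma([t,\infty))$. A set $A$ is invariant if $A=\{x\in A\mid\varphi(x,\mathbb R)\subset A\}$. A full solution $\gamma$ in $S$ is a link from $S_1$ to $S_2$ if $\alpha(\gamma)\cap S_1\ne\emptyset\ne\omega(\gamma)\cap S_2$. A Morse predecomposition of $S$ is an indexed family of mutually disjoint closed invariant subsets $\{M_p\mid p\in\mathbb P\}$ of $S$ such that every full solution in $S$ is a link from $M_p$ to $M_q$ for some $p,q\in\mathbb P$. *)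

(* Defs.v *)
From HB Require Import structures.
From mathcomp Require Import all_boot all_order all_algebra.
From mathcomp Require Import all_classical all_reals all_analysis.
Set Implicit Arguments. Unset Strict Implicit. Unset Printing Implicit Defensive.
Import Order.TTheory GRing.Theory Num.Theory.
Import numFieldNormedType.Exports.
Local Open Scope classical_set_scope.
Local Open Scope ring_scope.

Section Flows.
Context {R : realType} {X : pseudoMetricType R}.

Definition is_flow (phi : X -> R -> X) : Prop :=
  [/\ continuous (fun p : X * R => phi p.1 p.2),
      (forall x, phi x 0 = x) &
      (forall x s t, phi (phi x s) t = phi x (s + t))].

Definition full_solution (phi : X -> R -> X) (gamma : R -> X) : Prop :=
  forall s t, gamma (s + t) = phi (gamma s) t.

Definition alpha_limit (gamma : R -> X) : set X :=
  \bigcap_(t in [set t : R | t < 0]) closure (gamma @` [set s | s <= t]).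

Definition omega_limit (gamma : R -> X) : set X :=
  \bigcap_(t in [set t : R | 0 < t]) closure (gamma @` [set s | t <= s]).

Definition invariant_set (phi : X -> R -> X) (A : set X) : Prop :=
  A = [set x | A x /\ (phi x @` setT) `<=` A].

Definition solution_in (gamma : R -> X) (S : set X) : Prop :=
  range gamma `<=` S.

Definition link (phi : X -> R -> X) (S S1 S2 : set X) (gamma : R -> X) : Prop :=
  [/\ full_solution phi gamma, solution_in gamma S,
      alpha_limit gamma `&` S1 !=set0 & omega_limit gamma `&` S2 !=set0].

Definition mutually_disjoint (P : Type) (M : P -> set X) : Prop :=
  forall p q, p <> q -> M p `&` M q = set0.

Definition morse_predecomposition (phi : X -> R -> X) (S : set X)
    (P : Type) (M : P -> set X) : Prop :=
  [/\ mutually_disjoint M,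
      (forall p, [/\ closed (M p), invariant_set phi (M p) & M p `<=` S]) &
      (forall gamma, full_solution phi gamma -> solution_in gamma S ->
         exists p q, link phi S (M p) (M q) gamma)].

End Flows.

(* Main.v *)
Require Import Defs.
From HB Require Import structures.
From mathcomp Require Import all_boot all_order all_algebra.
From mathcomp Require Import all_classical all_reals all_analysis.
From mathcomp Require Import lra.
Import Order.TTheory GRing.Theory Num.Theory.
Import numFieldNormedType.Exports.
Local Open Scope classical_set_scope.
Local Open Scope ring_scope.

Lemma closure_cont (T U : topologicalType) (f : T -> U) (A : set T) y :
  {for y, continuous f} -> closure A y -> closure (f @` A) (f y).
Proof.
move=> fc cy B nB.
have : nbhs y (f @^-1` B) by exact: fc.
move=> /cy [z [Az Bz]]; exists (f z); split => //; exists z.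
Qed.

Lemma flow_cont (R : realType) (X : pseudoMetricType R) (phi : X -> R -> X)
  (hphi : is_flow phi) t : continuous (fun x => phi x t).
Proof.
case: hphi => hc _ _ x.
apply: (@continuous2_cvg _ X R X _ _ id (fun=> t) phi x t (hc (x, t))).
  exact: cvg_id.
exact: cvg_cst.
Qed.

Lemma omega_props (R : realType) (X : pseudoMetricType R)
    (hX : hausdorff_space X) (phi : X -> R -> X) (hphi : is_flow phi)
    (S : set X) (cS : compact S) (g : R -> X)
    (hg : forall t, exists c, forall s, phi (g s) t = g (s + c))
    (hS : range g `<=` S) :
  [/\ omega_limit g !=set0, closed (omega_limit g),
      invariant_set phi (omega_limit g) & omega_limit g `<=` S].
Proof.
split.
- have Fp : ProperFilter (g x @[x --> +oo]) by exact: fmap_proper_filter.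
  have FS : (g x @[x --> +oo]) S by exists 0; split; [rewrite num_real | by move=> x _; apply: hS; exists x].
  have [p [Sp cp]] := cS _ Fp FS.
  exists p => t /= t0 B nB.
  apply: cp nB; exists t; split; first by rewrite num_real.
  by move=> x /ltW hx; exists x.
- by apply: closed_bigI => t _; exact: closed_closure.
- rewrite /invariant_set; apply/seteqP; split => x /=; last by case.
  move=> ox; split => // _ [t _ <-] tau /= tau0.
  have [c hc] := hg t.
  pose tau1 := Num.max 1 (tau - c).
  have tau1p : 0 < tau1 by rewrite lt_max ltr01.
  have := @closure_cont _ _ _ _ _ (@flow_cont _ _ _ hphi t x) (ox _ tau1p).
  apply: closure_subset => _ [_ [s hs <-] <-].
  rewrite hc; exists (s + c) => //=.
  have : tau - c <= tau1 by rewrite le_max lexx orbT.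
  move: hs; rewrite /= => hs h2.
  have := le_trans h2 hs; lra.
- move=> x ox.
  have := ox 1 ltr01.
  have -> : S = closure S by apply/closure_id; exact: compact_closed.
  apply: closure_subset => _ [s _ <-]; by apply: hS; exists s.
Qed.

Lemma alpha_omega (R : realType) (X : pseudoMetricType R) (gamma : R -> X) :
  alpha_limit gamma = omega_limit (fun s => gamma (- s)).
Proof.
have E : forall t, gamma @` [set s | s <= - t] = (fun s => gamma (- s)) @` [set s | t <= s].
  move=> t; apply/seteqP; split => _ [s hs <-].
  - by exists (- s); [rewrite /=; move: hs => /= hs; lra | rewrite opprK].
  - by exists (- s) => //=; move: hs => /= hs; lra.
rewrite /alpha_limit /omega_limit; apply/seteqP; split => x /= h t ht.
- have := h (- t); rewrite E; apply; move: ht => /= ht; lra.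
- have := h (- t); rewrite -E opprK; apply; move: ht => /= ht; lra.
Qed.

Theorem proposition5p3 (R : realType) (X : pseudoMetricType R)
    (hX : hausdorff_space X) (lcX : locally_compact [set: X])
    (phi : X -> R -> X) (hphi : is_flow phi)
    (S : set X) (S0 : S !=set0) (cS : compact S) (iS : invariant_set phi S)
    (P : Type) (M : P -> set X)
    (dM : mutually_disjoint M)
    (cM : forall p, closed (M p)) (iM : forall p, invariant_set phi (M p))
    (sM : forall p, M p `<=` S) :
  morse_predecomposition phi S M <->
  (forall T : set X, T !=set0 -> closed T -> invariant_set phi T -> T `<=` S ->
     T `&` \bigcup_(p in [set: P]) M p !=set0).
Proof.
have hphi' := hphi; case: hphi' => _ ph0 phA.
split.
- case=> _ _ hlink T [x Tx] cT iT sT.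
  have rT : range (phi x) `<=` T.
    by move: Tx; rewrite {1}iT => -[_ h].
  have fs : full_solution phi (phi x) by move=> s t; rewrite phA.
  have [p [q [_ _ [y [ay Mpy]] _]]] := hlink _ fs (subset_trans rT sT).
  exists y; split; last by exists p.
  have := ay (-1) (ltrN10 R).
  have -> : T = closure T by apply/closure_id.
  apply: closure_subset => _ [s _ <-]; apply: rT; by exists s.
- move=> H; split; [exact: dM | by move=> p; split | move=> gamma fs sol].
  have [n1 c1 i1 s1] := @omega_props R X hX phi hphi S cS gamma
    (fun t => ex_intro _ t (fun s => esym (fs s t))) sol.
  have hg : forall t, exists c, forall s, phi (gamma (- s)) t = gamma (- (s + c)).
    by move=> t; exists (- t) => s; rewrite -fs opprD opprK.
  have sol' : range (fun s => gamma (- s)) `<=` S.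
    by move=> _ [s _ <-]; apply: sol; exists (- s).
  have [n2 c2 i2 s2] := @omega_props R X hX phi hphi S cS (fun s => gamma (- s))
    hg sol'.
  have [y [ay [p _ Mp]]] := H _ n2 c2 i2 s2.
  have [z [oz [q _ Mq]]] := H _ n1 c1 i1 s1.
  exists p, q; split => //; [exists y | exists z] => //.
  by rewrite alpha_omega.
Qed.
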